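(* Let $G$ be a graph with nonnegative edge costs, with distinguished vertices $start$ and $goal$, and let $c(x,y)$ denote the cost of a cheapest path from $x$ to $y$. Let $h_F$ and $h_B$ be nonnegative heuristic functions that are admissible and consistent (forward and backward, respectively). Fix real numbers $W \ge 1$ and $\lambda \le W$. For a direction $D \in \{F,B\}$ with opposite direction $\bar D$, and a node $n$ reached in direction $D$ with cost $g_D(n)$, define $b_D(n) = g_D(n) + h_D(n) + (g_D(n) - h_{\bar D}(n))$ and $b_{W_D}(n) = g_D(n) + W\cdot h_D(n) + \lambda\cdot (g_D(n) - h_{\bar D}(n))$. Then $b_{W_D}(n) \le W \cdot b_D(n)$ for every such node $n$ and every direction $D$.
   Context: The forward search starts at $start$ and the backward search at $goal$. For a node $n$ reached in the forward direction, $g_F(n)$ is the cost of the path from $start$ to $n$ by which it was reached; for the backward direction, $g_B(n)$ is the cost of the path from $n$ to $goal$ by which it was reached. $h_F(s)$ estimates $c(s,goal)$ and $h_B(s)$ estimates $c(start,s)$. $h_F$ is forward admissible if $h_F(s)\le c(s,goal)$ for all $s$, and forward consistent if $h_F(s)\le c(s,s')+h_F(s')$ for all $s,s'$; backward admissibility and consistency of $h_B$ are defined analogously ($h_B(s)\le c(start,s)$, and $h_B(s')\le c(s,s')+h_B(s)$). *)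

(* Defs.v *)
From HB Require Import structures.
From mathcomp Require Import all_boot all_order all_algebra.
From mathcomp Require Import boolp classical_sets reals constructive_ereal ereal.
Set Implicit Arguments. Unset Strict Implicit. Unset Printing Implicit Defensive.
Import Order.TTheory GRing.Theory Num.Theory.
Local Open Scope ring_scope.
Local Open Scope classical_set_scope.

Section Graph.
Context {R : realType} {V : Type} (E : V -> V -> Prop) (w : V -> V -> R).

Fixpoint is_walk (x : V) (p : seq V) : Prop :=
  match p with [::] => True | y :: q => E x y /\ is_walk y q end.

Fixpoint wcost (x : V) (p : seq V) : R :=
  match p with [::] => 0 | y :: q => w x y + wcost y q end.

Definition walk_from_to (x y : V) (p : seq V) : Prop := is_walk x p /\ last x p = y.

(* c(x,y): cost of a cheapest path from x to y (+oo if none) *)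
Definition cdist (x y : V) : \bar R :=
  ereal_inf [set (wcost x p)%:E | p in walk_from_to x y].

End Graph.

Inductive dir := Fwd | Bwd.
Definition opp_dir (D : dir) : dir := if D is Fwd then Bwd else Fwd.

Section Search.
Context {R : realType} {V : Type} (E : V -> V -> Prop) (w : V -> V -> R)
  (start goal : V) (hF hB : V -> R).

Definition heur (D : dir) : V -> R := if D is Fwd then hF else hB.

Definition fwd_admissible : Prop := forall s, ((hF s)%:E <= cdist E w s goal)%E.
Definition fwd_consistent : Prop :=
  forall s s', ((hF s)%:E <= cdist E w s s' + (hF s')%:E)%E.
Definition bwd_admissible : Prop := forall s, ((hB s)%:E <= cdist E w start s)%E.
Definition bwd_consistent : Prop :=
  forall s s', ((hB s')%:E <= cdist E w s s' + (hB s)%:E)%E.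

Definition reached (D : dir) (n : V) (g : R) : Prop :=
  match D with
  | Fwd => exists p, walk_from_to E start n p /\ wcost w start p = g
  | Bwd => exists p, walk_from_to E n goal p /\ wcost w n p = g
  end.

Definition bval (D : dir) (n : V) (g : R) : R :=
  g + heur D n + (g - heur (opp_dir D) n).

Definition bWval (Wt lam : R) (D : dir) (n : V) (g : R) : R :=
  g + Wt * heur D n + lam * (g - heur (opp_dir D) n).

End Search.

(* Main.v *)
Require Import Defs.
From HB Require Import structures.
From mathcomp Require Import all_boot all_order all_algebra.
From mathcomp Require Import boolp classical_sets reals constructive_ereal ereal.
From mathcomp Require Import lra.
Import Order.TTheory GRing.Theory Num.Theory.
Local Open Scope ring_scope.

Lemma wcost_ge0 (R : realType) (V : Type) (E : V -> V -> Prop) (w : V -> V -> R) :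
  (forall x y, E x y -> 0 <= w x y) ->
  forall p x, is_walk E x p -> 0 <= wcost w x p.
Proof.
move=> hw; elim=> [|y q IH] x //= [exy wq].
by rewrite addr_ge0 // ?hw // IH.
Qed.

Lemma cdist_le (R : realType) (V : Type) (E : V -> V -> Prop) (w : V -> V -> R) x y p :
  walk_from_to E x y p -> (cdist E w x y <= (wcost w x p)%:E)%E.
Proof. by move=> hp; apply: ereal_inf_lbound; exists p. Qed.

Lemma key (R : realType) (W lam g h h' : R) :
  1 <= W -> lam <= W -> 0 <= g -> h' <= g ->
  g + W * h + lam * (g - h') <= W * (g + h + (g - h')).
Proof.
move=> h1 h2 h3 h4.
have A : 0 <= (W - 1) * g by apply: mulr_ge0; lra.
have B : 0 <= (W - lam) * (g - h') by apply: mulr_ge0; lra.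
lra.
Qed.

Theorem lemma1 (R : realType) (V : Type) (E : V -> V -> Prop) (w : V -> V -> R)
  (start goal : V) (hF hB : V -> R) (W lam : R) :
  (forall x y, E x y -> 0 <= w x y) ->
  (forall s, 0 <= hF s) -> (forall s, 0 <= hB s) ->
  fwd_admissible E w goal hF -> fwd_consistent E w hF ->
  bwd_admissible E w start hB -> bwd_consistent E w hB ->
  1 <= W -> lam <= W ->
  forall (D : dir) (n : V) (g : R),
    reached E w start goal D n g ->
    bWval hF hB W lam D n g <= W * bval hF hB D n g.
Proof.
move=> hw _ _ fa _ ba _ h1 h2 [] n g [p [hp <-]]; rewrite /bWval /bval /=;
  apply: key => //.
- by apply: (@wcost_ge0 _ _ E w hw); case: hp.
- by rewrite -lee_fin; apply: (le_trans (ba n)); exact: (@cdist_le _ _ E w _ _ p).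
- by apply: (@wcost_ge0 _ _ E w hw); case: hp.
- by rewrite -lee_fin; apply: (le_trans (fa n)); exact: (@cdist_le _ _ E w _ _ p).
Qed.
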